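(* Let $F \in \mathbb{C}^{n \times n}$ be a unitary matrix with $|F_{ij}|^2 \leq \frac{c}{n}$ for all $i,j$ (for some constant $c>0$), and let $S \subseteq \{1,\dots,n\}$ be an index set with $|S| = t$. Then for any $k$-sparse vector $z \in \mathbb{C}^{n}$, $$\|(F^{*})_S F z\|^2_2 \leq \frac{ktc}{n}\|z\|_2^2 .$$
   Context: For a matrix $B \in \mathbb{C}^{m\times N}$ and $S \subseteq \{1,\dots,N\}$, $(B)_S$ denotes the $m \times N$ matrix obtained from $B$ by replacing the columns indexed by $\{1,\dots,N\}\setminus S$ with zero columns. $F^*$ is the conjugate transpose of $F$. A vector is $k$-sparse if it has at most $k$ nonzero entries. *)

(* Defs.v *)
From HB Require Import structures.
From mathcomp Require Import all_boot all_order all_algebra.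
Set Implicit Arguments. Unset Strict Implicit. Unset Printing Implicit Defensive.
Import Order.TTheory GRing.Theory Num.Theory.
Local Open Scope ring_scope.

Definition conjT (C : numClosedFieldType) m n (A : 'M[C]_(m, n)) : 'M[C]_(n, m) :=
  (map_mx Num.conj A)^T.

Definition unitary (C : numClosedFieldType) n (F : 'M[C]_n) : Prop :=
  conjT F *m F = 1%:M.

Definition colrestr (C : numClosedFieldType) m N (B : 'M[C]_(m, N)) (S : {set 'I_N}) :
  'M[C]_(m, N) := \matrix_(i, j) (if j \in S then B i j else 0).

Definition norm2 (C : numClosedFieldType) n (v : 'cV[C]_n) : C :=
  \sum_i `|v i ord0| ^+ 2.

Definition sparse (C : numClosedFieldType) n (k : nat) (z : 'cV[C]_n) : bool :=
  (#|[set i | z i ord0 != 0%R]| <= k)%N.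

(* Main.v *)
Require Import Defs.
From mathcomp Require Import all_boot all_order all_algebra.
From mathcomp Require Import ring.
Import Order.TTheory GRing.Theory Num.Theory.
Local Open Scope ring_scope.

Lemma cs (R : numDomainType) (I : finType) (x y : I -> R) :
  (forall i, 0 <= x i) -> (forall i, 0 <= y i) ->
  (\sum_i x i * y i) ^+ 2 <= (\sum_i x i ^+ 2) * (\sum_i y i ^+ 2).
Proof.
move=> hx hy.
have E1 : (\sum_i x i * y i) ^+ 2 = \sum_i \sum_j (x i * y j) * (x j * y i).
  rewrite expr2 big_distrlr /=; apply: eq_bigr => i _; apply: eq_bigr => j _.
  by rewrite mulrACA [y i * y j]mulrC mulrACA.
have E2 : (\sum_i x i ^+ 2) * (\sum_i y i ^+ 2) = \sum_i \sum_j (x i * y j) ^+ 2.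
  rewrite big_distrlr /=; apply: eq_bigr => i _; apply: eq_bigr => j _.
  by rewrite exprMn.
have E3 : (\sum_i x i ^+ 2) * (\sum_i y i ^+ 2) = \sum_i \sum_j (x j * y i) ^+ 2.
  rewrite E2 exchange_big /=; done.
rewrite -(ler_pMn2r (n:=2)) // E1 -!sumrMnl.
have -> : ((\sum_i x i ^+ 2) * (\sum_i y i ^+ 2)) *+ 2 =
   \sum_i \sum_j ((x i * y j) ^+ 2 + (x j * y i) ^+ 2).
  rewrite mulr2n {1}E2 E3 -big_split /=; apply: eq_bigr => i _.
  by rewrite -big_split.
apply: ler_sum => i _; rewrite -sumrMnl; apply: ler_sum => j _.
apply: (real_leif_mean_square_scaled _ _).1; apply: ger0_real;
  by apply: mulr_ge0.
Qed.

Lemma conjTM (C : numClosedFieldType) m n p (A : 'M[C]_(m, n)) (B : 'M[C]_(n, p)) :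
  conjT (A *m B) = conjT B *m conjT A.
Proof. by rewrite /conjT map_mxM trmx_mul. Qed.

Lemma conjTK (C : numClosedFieldType) m n (A : 'M[C]_(m, n)) : conjT (conjT A) = A.
Proof. by apply/matrixP => i j; rewrite !mxE conjCK. Qed.

Lemma norm2E (C : numClosedFieldType) n (v : 'cV[C]_n) :
  norm2 v = (conjT v *m v) ord0 ord0.
Proof.
rewrite /norm2 !mxE; apply: eq_bigr => i _.
by rewrite !mxE normCK mulrC.
Qed.

Lemma norm2_ge0 (C : numClosedFieldType) n (v : 'cV[C]_n) : 0 <= norm2 v.
Proof. by apply: sumr_ge0 => i _; rewrite exprn_ge0. Qed.

Theorem lemma1 (C : numClosedFieldType) (n : nat) (F : 'M[C]_n) (c : C)
  (hc : 0 < c) (hF : unitary F)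
  (hentry : forall i j, `|F i j| ^+ 2 <= c / n%:R)
  (S : {set 'I_n}) (t : nat) (hS : #|S| = t)
  (k : nat) (z : 'cV[C]_n) (hz : sparse k z) :
  norm2 (colrestr (conjT F) S *m (F *m z)) <= (k * t)%:R * c / n%:R * norm2 z.
Proof.
set w := F *m z.
set w' : 'cV[C]_n := \col_j (if j \in S then w j ord0 else 0).
have Hy : colrestr (conjT F) S *m w = conjT F *m w'.
  apply/matrixP => i j; rewrite [j]ord1 !mxE; apply: eq_bigr => l _.
  rewrite !mxE; case: ifP => _; by rewrite ?mul0r ?mulr0.
have FF : F *m conjT F = 1%:M by apply: mulmx1C.
have Hn : norm2 (conjT F *m w') = norm2 w'.
  by rewrite !norm2E conjTM conjTK mulmxA -(mulmxA _ F) FF mulmx1.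
rewrite Hy Hn.
have Hw' : norm2 w' = \sum_(j in S) `|w j ord0| ^+ 2.
  rewrite /norm2 [RHS]big_mkcond /=; apply: eq_bigr => j _.
  by rewrite mxE; case: (j \in S); rewrite ?normr0 ?expr0n.
set T := [set i | z i ord0 != 0].
have cn0 : 0 <= c / n%:R by rewrite divr_ge0 // ltW.
have Hb : forall j, `|w j ord0| ^+ 2 <= k%:R * (c / n%:R) * norm2 z.
  move=> j.
  have H1 : `|w j ord0| <= \sum_l (if l \in T then `|F j l| else 0) * `|z l ord0|.
    rewrite mxE; apply: le_trans (ler_norm_sum _ _ _) _.
    rewrite le_eqVlt; apply/orP; left; apply/eqP; apply: eq_bigr => l _.
    rewrite normrM inE; case: eqP => [->|]; by rewrite ?normr0 ?mulr0 ?mul0r.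
  have H2 := lerXn2r 2 (normr_ge0 (w j ord0)) (le_trans (normr_ge0 _) H1) H1.
  apply: le_trans H2 _.
  have hx : forall l, 0 <= (if l \in T then `|F j l| else 0) by move=> l; case: (l \in T).
  have hy : forall l, 0 <= `|z l ord0| by move=> l.
  apply: le_trans (cs _ _ _ _ hx hy) _.
  apply: ler_wpM2r; first by exact: norm2_ge0.
  have -> : \sum_l (if l \in T then `|F j l| else 0) ^+ 2 =
             \sum_(l in T) `|F j l| ^+ 2.
    by rewrite [RHS]big_mkcond /=; apply: eq_bigr => l _; case: (l \in T); rewrite ?expr0n.
  apply: le_trans (ler_sum _ (fun l _ => hentry j l)) _.
  rewrite sumr_const -(mulr_natl (c / n%:R)); apply: ler_wpM2r => //.
  by rewrite ler_nat.
rewrite Hw'; apply: le_trans (ler_sum _ (fun j _ => Hb j)) _.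
rewrite sumr_const hS -mulr_natl le_eqVlt; apply/orP; left; apply/eqP.
rewrite natrM; ring.
Qed.
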